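(* Let $n\ge 1$, $V=(\mathbb{Z}/2\mathbb{Z})^n$ with standard basis $e_1,\dots,e_n$ and standard inner product $\langle (x_i),(y_i)\rangle=\sum_i x_iy_i$, and let $\mathcal{O}$ be the group of linear automorphisms of $V$ preserving this inner product. For integers $k\ge 1$ and $1\le i_1<i_2<\cdots<i_{2k}\le n$, let $R(i_1,\dots,i_{2k})$ be the linear map of $V$ defined by $R(e_{i_j})=\sum_{l\neq j}e_{i_l}$ for $1\le j\le 2k$ (sum over $l\in\{1,\dots,2k\}\setminus\{j\}$) and $R(e_m)=e_m$ for $m\notin\{i_1,\dots,i_{2k}\}$. Then each $R(i_1,\dots,i_{2k})$ is an involution in $\mathcal{O}$, and $\mathcal{O}$ is generated by the set of all such involutions $R(i_1,\dots,i_{2k})$. *)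

(* Defs.v *)
From mathcomp Require Import all_boot all_order all_algebra.
Set Implicit Arguments. Unset Strict Implicit. Unset Printing Implicit Defensive.
Import GRing.Theory.
Local Open Scope ring_scope.

(* V = (Z/2Z)^n realised as row vectors 'rV['F_2]_n; a linear map of V is a
   matrix A acting on the right, v |-> v *m A, so row i of A is the image of e_i. *)

Definition ip (n : nat) (x y : 'rV['F_2]_n) : 'F_2 := \sum_(i < n) x 0 i * y 0 i.

Definition in_O (n : nat) (A : 'M['F_2]_n) : Prop :=
  A \in unitmx /\ forall x y : 'rV['F_2]_n, ip (x *m A) (y *m A) = ip x y.

(* index sets {i_1 < ... < i_2k} with k >= 1, as subsets of 'I_n of even positive size *)
Definition R_index (n : nat) (S : {set 'I_n}) : bool := (0 < #|S|)%N && ~~ odd #|S|.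

Definition Rmx (n : nat) (S : {set 'I_n}) : 'M['F_2]_n :=
  \matrix_(i < n, j < n)
    (if i \in S then ((j \in S) && (j != i))%:R else (i == j)%:R).

Inductive gen_by (n : nat) (P : 'M['F_2]_n -> Prop) : 'M['F_2]_n -> Prop :=
  | gen_one : gen_by P 1%:M
  | gen_in A : P A -> gen_by P A
  | gen_mul A B : gen_by P A -> gen_by P B -> gen_by P (A *m B)
  | gen_inv A : gen_by P A -> gen_by P (invmx A).

(* Main.v *)
Require Import Defs.
From mathcomp Require Import all_boot all_order all_algebra.
Import GRing.Theory.
Local Open Scope ring_scope.
Lemma F2c (x : 'F_2) : x = 0 \/ x = 1.
Proof. case: x => [[|[|k]] Hk]; [left|right|]; try by apply/val_inj. by []. Qed.
Lemma F2a (x : 'F_2) : x + x = 0.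
Proof. have [->|->] := F2c x. by rewrite addr0. by apply/val_inj. Qed.
Lemma F2n m : (m%:R : 'F_2) = (odd m)%:R.
Proof. by rewrite -modn2 -Fp_nat_mod. Qed.
Lemma F2sq (x : 'F_2) : x * x = x.
Proof. by have [->|->] := F2c x; rewrite ?mulr0 ?mulr1. Qed.
Lemma F2ne (x : 'F_2) : (x != 0)%:R = x.
Proof. by have [->|->] := F2c x; rewrite ?eqxx // oner_eq0. Qed.
Lemma F2ne0 (x : 'F_2) : x != 0 -> x = 1.
Proof. by have [->|->] := F2c x; rewrite ?eqxx. Qed.

Section S.
Variable n : nat.
Implicit Types x y z u : 'rV['F_2]_n.
Implicit Types S : {set 'I_n}.
Lemma ipC x y : ip x y = ip y x.
Proof. by apply: eq_bigr => i _; rewrite mulrC. Qed.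
Lemma ipDl x y z : ip (x + y) z = ip x z + ip y z.
Proof. by rewrite /ip -big_split; apply: eq_bigr => i _; rewrite mxE mulrDl. Qed.
Lemma ipDr x y z : ip z (x + y) = ip z x + ip z y.
Proof. by rewrite ipC ipDl !(ipC z). Qed.
Lemma ipZl a x y : ip (a *: x) y = a * ip x y.
Proof. by rewrite /ip mulr_sumr; apply: eq_bigr => i _; rewrite mxE mulrA. Qed.
Lemma ipZr a x y : ip y (a *: x) = a * ip y x.
Proof. by rewrite ipC ipZl ipC. Qed.
Lemma ipe x j : ip x 'e_j = x 0 j.
Proof.
rewrite /ip (bigD1 j) //= big1 ?addr0 => [|i /negbTE ij]; rewrite mxE.
  by rewrite !eqxx mulr1.
by rewrite ij andbF mulr0.
Qed.
Lemma eeE (i j : 'I_n) : (delta_mx 0 i : 'rV['F_2]_n) 0 j = (i == j)%:R :> 'F_2.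
Proof. by rewrite mxE eq_sym. Qed.
Lemma ipmx x y : ip x y = (x *m y^T) 0 0.
Proof. by rewrite mxE; apply: eq_bigr => i _; rewrite mxE. Qed.

Definition ind (S : {set 'I_n}) : 'rV['F_2]_n := \row_i (i \in S)%:R.

Lemma Rmx_ind S : Rmx S = 1%:M + (ind S)^T *m ind S.
Proof.
apply/matrixP => i j; rewrite !mxE big_ord1 !mxE.
case: (boolP (i \in S)) => iS; case: (boolP (j \in S)) => jS /=;
  rewrite ?mulr1 ?mulr0 ?mul0r ?addr0 //.
  by have [e|ij] := eqVneq i j; rewrite /= ?F2a ?add0r.
by have [e|//] := eqVneq i j; subst i; rewrite iS in jS.
Qed.

Lemma Rmx_mul x S : x *m Rmx S = x + ip x (ind S) *: ind S.
Proof.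
rewrite Rmx_ind mulmxDr mulmx1 mulmxA [x *m _]mx11_scalar mul_scalar_mx ipmx.
by [].
Qed.

Lemma ip_ind S : ip (ind S) (ind S) = #|S|%:R.
Proof.
rewrite /ip -sum1_card natr_sum [RHS]big_mkcond /=; apply: eq_bigr => i _.
by rewrite mxE F2sq; case: (i \in S).
Qed.

Lemma R_index_ip S : R_index S -> ip (ind S) (ind S) = 0.
Proof. by case/andP=> _ ev; rewrite ip_ind F2n (negbTE ev). Qed.

Lemma Rmx_ip S x y : R_index S -> ip (x *m Rmx S) (y *m Rmx S) = ip x y.
Proof.
move=> /R_index_ip h; rewrite !Rmx_mul !ipDl !ipDr !ipZl !ipZr h !mulr0 addr0.
by rewrite (ipC (ind S) y) mulrC -addrA F2a addr0.
Qed.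

Lemma Rmx_mul2 S x : R_index S -> x *m Rmx S *m Rmx S = x.
Proof.
move=> /R_index_ip h; rewrite !Rmx_mul ipDl ipZl h mulr0 addr0 -addrA.
by rewrite -scalerDl F2a scale0r addr0.
Qed.

Lemma mx_rowsE (A B : 'M['F_2]_n) : (forall x, x *m A = x *m B) -> A = B.
Proof. by move=> h; apply/row_matrixP => i; rewrite !rowE h. Qed.

Lemma Rmx_sq (S : {set 'I_n}) : R_index S -> Rmx S *m Rmx S = 1%:M.
Proof. by move=> h; apply: mx_rowsE => x; rewrite mulmxA Rmx_mul2 // mulmx1. Qed.

Lemma Rmx_ne1 S : R_index S -> Rmx S != 1%:M.
Proof.
case/andP=> c0 ev.
have : (1 < #|S|)%N by move: c0 ev; case: #|S| => [|[|k]].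
case/card_gt1P=> i [j [iS jS ij]]; apply/negP => /eqP /matrixP /(_ i j).
by rewrite !mxE iS jS eq_sym ij (negbTE ij) /= => /eqP; rewrite oner_eq0.
Qed.

Lemma Rmx_O S : R_index S -> in_O (Rmx S).
Proof.
move=> h; split; last by move=> x y; apply: Rmx_ip.
by case: (mulmx1_unit (Rmx_sq S h)).  
Qed.

Lemma in_O1 : in_O (1%:M : 'M['F_2]_n).
Proof. by split; [apply: unitmx1 | move=> x y; rewrite !mulmx1]. Qed.
Lemma in_O_mul (A B : 'M['F_2]_n) : in_O A -> in_O B -> in_O (A *m B).
Proof.
move=> [uA hA] [uB hB]; split; first by rewrite unitmx_mul uA.
by move=> x y; rewrite !mulmxA hB hA.
Qed.
Lemma in_O_inv (A : 'M['F_2]_n) : in_O A -> in_O (invmx A).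
Proof.
move=> [uA hA]; split; first by rewrite unitmx_inv.
by move=> x y; rewrite -hA !mulmxKV.
Qed.

Definition orth (A : 'M['F_2]_n) := forall i j, ip (row i A) (row j A) = (i == j)%:R.

Lemma in_O_orth A : in_O A -> orth A.
Proof. by move=> [_ hA] i j; rewrite !rowE hA ipe eeE. Qed.

Lemma orth_R A S : orth A -> R_index S -> orth (A *m Rmx S).
Proof. by move=> hA hS i j; rewrite !row_mul Rmx_ip. Qed.

Lemma fixR A S i : row i A = 'e_i -> i \notin S -> row i (A *m Rmx S) = 'e_i.
Proof.
move=> hi iS; rewrite row_mul hi Rmx_mul ipC ipe mxE (negbTE iS).
by rewrite scale0r addr0.
Qed.

Lemma fix0 A i j : orth A -> row i A = 'e_i -> i != j -> row j A 0 i = 0.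
Proof. by move=> hA hi ij; rewrite -ipe -hi hA eq_sym (negbTE ij). Qed.

Lemma F2av x : x + x = 0.
Proof. by apply/rowP => i; rewrite !mxE F2a. Qed.

Lemma odd0 m : (m%:R : 'F_2) = 0 -> ~~ odd m.
Proof. by rewrite F2n; case: (odd m) => // /eqP; rewrite oner_eq0. Qed.

Lemma case1 A j : orth A -> row j A 0 j = 0 ->
  exists S, [/\ R_index S, (forall i, row i A = 'e_i -> i \notin S)
            & row j (A *m Rmx S) = 'e_j].
Proof.
move=> hA vj; set v := row j A.
pose S := [set i | (v + 'e_j) 0 i != 0].
have indS : ind S = v + 'e_j by apply/rowP => i; rewrite [LHS]mxE inE F2ne.
have jS : j \in S by rewrite inE mxE vj eeE eqxx add0r oner_eq0.
have vv : ip v v = 1 by rewrite hA eqxx.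
exists S; split.
- apply/andP; split; first by rewrite card_gt0; apply/set0Pn; exists j.
  apply: odd0; rewrite -ip_ind indS !ipDl !ipDr vv ipe vj ipC ipe vj.
  by rewrite ipe eeE eqxx addr0 add0r F2a.
- move=> i hi; rewrite inE mxE negbK.
  have ij : i != j.
    by apply: contra_eqN vj => /eqP <-; rewrite /v hi eeE eqxx oner_eq0.
  by rewrite fix0 // eeE [j == i]eq_sym (negbTE ij) add0r.
- rewrite row_mul Rmx_mul -/v indS ipDr vv ipe vj addr0 scale1r addrA F2av.
  by rewrite add0r.
Qed.

Lemma case2 A j : orth A -> row j A != 'e_j -> row j A 0 j = 1 ->
  exists S, [/\ R_index S, (forall i, row i A = 'e_i -> i \notin S)
            & row j (A *m Rmx S) 0 j = 0].
Proof.
move=> hA vne vj; set v := row j A.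
case: (pickP (fun w => (row w A != 'e_w) && (v 0 w == 0))) => [w /andP [hw /eqP vw]|none].
  have wj : w != j by apply: contra_eqN vw => /eqP ->; rewrite vj oner_eq0.
  exists [set j; w]; split.
  - by rewrite /R_index cards2 eq_sym wj.
  - move=> i hi; rewrite !inE; apply/negP => /orP [] /eqP ie; subst i.
      by rewrite hi eqxx in vne.
    by rewrite hi eqxx in hw.
  - have indS : ind [set j; w] = 'e_j + 'e_w.
      apply/rowP => i; rewrite !mxE !inE /=.
      have [e|ij] := eqVneq i j; first by subst i; rewrite eq_sym (negbTE wj) addr0.
      by rewrite add0r.
    rewrite row_mul Rmx_mul -/v indS ipDr !ipe vj vw addr0 scale1r !mxE /=.
    move: vj; rewrite mxE => ->; by rewrite eqxx [j == w]eq_sym (negbTE wj) addr0 F2a.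
have [k hk] : exists k : 'I_n, v 0 k != (delta_mx 0 j : 'rV['F_2]_n) 0 k.
  apply/existsP; apply: contraR vne => /existsPn h; apply/eqP/rowP => k; apply/eqP.
  exact: negbNE (h k).
have kj : k != j by apply: contra_neqN hk => /eqP ->; rewrite vj eeE eqxx.
move: hk; rewrite eeE [j == k]eq_sym (negbTE kj) => /F2ne0 vk.
have hk : row k A != 'e_k.
  apply: contra_eqN vk => /eqP hk; rewrite /v fix0 //.
set w := row k A.
have : ip v w = ip w w.
  apply: eq_bigr => i _.
  have [hi|hi] := eqVneq (row i A) 'e_i.
    rewrite /w fix0 //; last by apply: contra_neq hk => ik; rewrite -ik.
    by rewrite !mulr0.
  move: (none i) => /=; rewrite hi /= => /negbT /F2ne0 ->.
  by rewrite mul1r F2sq.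
by rewrite /v /w !hA eqxx eq_sym (negbTE kj) => /eqP; rewrite eq_sym oner_eq0.
Qed.

Definition Pgen (B : 'M['F_2]_n) := exists2 S : {set 'I_n}, R_index S & B = Rmx S.

Lemma gen_R X S : R_index S -> gen_by Pgen X -> gen_by Pgen (X *m Rmx S).
Proof. by move=> hS hX; apply: gen_mul hX (gen_in _); exists S. Qed.

Lemma step A j : orth A -> row j A != 'e_j ->
  exists B, [/\ orth B, (forall i, row i A = 'e_i -> row i B = 'e_i),
             row j B = 'e_j & (gen_by Pgen B -> gen_by Pgen A)].
Proof.
move=> hA vne.
have c1 : forall A', orth A' -> row j A' 0 j = 0 ->
  exists B, [/\ orth B, (forall i, row i A' = 'e_i -> row i B = 'e_i),
             row j B = 'e_j & (gen_by Pgen B -> gen_by Pgen A')].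
  move=> A' hA' vj; have [S [hS hF hj]] := case1 _ _ hA' vj.
  exists (A' *m Rmx S); split => //.
  - exact: orth_R.
  - by move=> i hi; apply: fixR => //; apply: hF.
  - by move=> hB; have := gen_R _ _ hS hB; rewrite -mulmxA Rmx_sq // mulmx1.
have [vj|vj] := F2c (row j A 0 j); first exact: c1.
have [S [hS hF hj]] := case2 _ _ hA vne vj.
have [B [hB hFB hjB hg]] := c1 _ (orth_R _ _ hA hS) hj.
exists B; split => //.
  by move=> i hi; apply: hFB; apply: fixR => //; apply: hF.
by move=> g; have := gen_R _ _ hS (hg g); rewrite -mulmxA Rmx_sq // mulmx1.
Qed.

Lemma main m (A : 'M['F_2]_n) : orth A ->
  (#|[set i | row i A != 'e_i]| <= m)%N -> gen_by Pgen A.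
Proof.
elim: m A => [|m IH] A hA hc.
  have -> : A = 1%:M.
    apply/row_matrixP => i; rewrite [RHS]rowE mulmx1.
    apply/eqP; apply: contraT => hi.
    have : i \in [set i | row i A != 'e_i] by rewrite inE.
    by move: hc; rewrite leqn0 cards_eq0 => /eqP ->; rewrite inE.
  exact: gen_one.
case: (set_0Vmem [set i | row i A != 'e_i]) => [e|[j]].
  by apply: IH => //; rewrite e cards0.
rewrite inE => hj.
have [B [hB hFB hjB hg]] := step _ _ hA hj.
apply: hg; apply: IH => //.
rewrite -ltnS (leq_trans _ hc) // (cardsD1 j [set i | row i A != 'e_i]) inE hj.
rewrite add1n ltnS; apply: subset_leq_card; apply/subsetP => i.
rewrite !inE => hi; apply/andP; split.
  by apply: contra_neq hi => ->.
by apply: contra hi => /eqP /hFB ->.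
Qed.
End S.

Theorem theorem5p1 (n : nat) (hn : (1 <= n)%N) :
  (forall S : {set 'I_n}, R_index S ->
      Rmx S *m Rmx S = 1%:M /\ Rmx S != 1%:M /\ in_O (Rmx S)) /\
  (forall A : 'M['F_2]_n,
      in_O A <-> gen_by (fun B => exists2 S : {set 'I_n}, R_index S & B = Rmx S) A).
Proof.
split.
  by move=> S hS; split; [apply: Rmx_sq | split; [apply: Rmx_ne1 | apply: Rmx_O]].
move=> A; split.
  by move=> hA; apply: (@main n n); [apply: in_O_orth | rewrite -[X in (_ <= X)%N]card_ord max_card].
elim=> [|B [S hS ->]|B C _ hB _ hC|B _ hB].
- exact: in_O1.
- exact: Rmx_O.
- exact: in_O_mul.
- exact: in_O_inv.
Qed.
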